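(* For integers $0 \le j \le i$ let $P(i,j) = \frac{i!}{(i-j)!}$, and for an integer $i \geq 0$ let $F(i) = \sum_{j=0}^{i} P(i,j)$. For integers $N \geq 1$ and $1 \leq n \leq N$ define \[ P_{RPS}(n \mid N) = \frac{P(N,n)\,\bigl(F(n)-1\bigr)}{\sum_{i=1}^{N} P(N,i)\,\bigl(F(i)-1\bigr)} . \] Then \[ \lim_{N \to \infty} P_{RPS}(N \mid N) = 1 . \]
   Context: $P_{RPS}(\cdot \mid N)$ is called the RPST distribution: a probability distribution on $\{1, \dots, N\}$, where $P(N,n)$ is the number of ordered selections (permutation sequences) of length $n$ from $N$ elements, and $F(i)$ is the number of permutation events, including the empty one, on a set of $i$ elements. *)

(* Defs.v *)
From Stdlib Require Import Reals Arith.
From Coquelicot Require Import Coquelicot.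
Open Scope R_scope.

Definition Pperm (i j : nat) : nat := Nat.div (fact i) (fact (i - j)).

Definition Fsum (i : nat) : nat :=
  List.fold_right Nat.add 0%nat (List.map (Pperm i) (List.seq 0 (S i))).

Definition rps_weight (N n : nat) : R := INR (Pperm N n) * (INR (Fsum n) - 1).

Definition P_RPS (n N : nat) : R :=
  rps_weight N n / sum_f 1 N (fun i => rps_weight N i).

(* Main.v *)
Require Import Defs.
From Stdlib Require Import Reals.
From Coquelicot Require Import Coquelicot.
From Stdlib Require Import Arith Lia Lra List.

Lemma fact_divide k m : Nat.divide (fact m) (fact (k + m)).
Proof.
  induction k as [|k IH]; simpl. apply Nat.divide_refl.
  apply Nat.divide_add_r; [exact IH|]. apply Nat.divide_mul_r. exact IH.
Qed.

Lemma Pperm_mul i j : (j <= i)%nat -> (Pperm i j * fact (i - j) = fact i)%nat.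
Proof.
  intros H. unfold Pperm.
  destruct (fact_divide j (i - j)) as [q Hq].
  replace (j + (i - j))%nat with i in Hq by lia.
  rewrite Hq, Nat.div_mul by apply fact_neq_0. reflexivity.
Qed.

Lemma INR_Pperm i j : (j <= i)%nat -> INR (Pperm i j) = INR (fact i) / INR (fact (i - j)).
Proof.
  intros H. rewrite <- (Pperm_mul i j H), mult_INR. field.
  apply not_0_INR, fact_neq_0.
Qed.

Lemma Pperm_S n j : (j <= n)%nat -> Pperm (S n) (S j) = (S n * Pperm n j)%nat.
Proof.
  intros H. apply (Nat.mul_cancel_r _ _ (fact (n - j))). apply fact_neq_0.
  pose proof (Pperm_mul (S n) (S j) ltac:(lia)) as H1. simpl (S n - S j)%nat in H1.
  rewrite H1, <- Nat.mul_assoc, Pperm_mul by exact H. reflexivity.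
Qed.

Lemma Pperm_0 n : Pperm n 0 = 1%nat.
Proof. unfold Pperm. rewrite Nat.sub_0_r, Nat.div_same by apply fact_neq_0. reflexivity. Qed.

Lemma fold_aux n l : (forall x, In x l -> x <= n)%nat ->
  fold_right Nat.add 0%nat (map (fun j => Pperm (S n) (S j)) l)
  = (S n * fold_right Nat.add 0%nat (map (Pperm n) l))%nat.
Proof.
  induction l as [|a l IH]; intros H; simpl. lia.
  rewrite IH by (intros; apply H; simpl; auto).
  rewrite Pperm_S by (apply H; simpl; auto). lia.
Qed.

Lemma Fsum_S n : Fsum (S n) = (1 + S n * Fsum n)%nat.
Proof.
  unfold Fsum. change (seq 0 (S (S n))) with (0%nat :: seq 1 (S n)).
  rewrite <- seq_shift. rewrite map_cons, map_map.
  pose proof (fold_aux n (seq 0 (S n))) as H.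
  assert (Hin : forall x, In x (seq 0 (S n)) -> (x <= n)%nat).
  { intros x Hx. apply in_seq in Hx. lia. }
  specialize (H Hin). clear Hin.
  generalize dependent (seq 0 (S n)). intros l H.
  cbn [fold_right]. rewrite H, Pperm_0. reflexivity.
Qed.

Lemma Fsum_0 : Fsum 0 = 1%nat.
Proof. reflexivity. Qed.

Lemma Fsum_bounds n : (1 <= n)%nat -> (fact n + 1 <= Fsum n /\ Fsum n + 1 <= 3 * fact n)%nat.
Proof.
  induction n as [|n IH]; intros H. lia.
  destruct n as [|n]. simpl. rewrite Fsum_S, Fsum_0. simpl. lia.
  destruct (IH ltac:(lia)) as [A B]. rewrite Fsum_S.
  change (fact (S (S n))) with (S (S n) * fact (S n))%nat. nia.
Qed.

Lemma Fsum_le n : (Fsum n <= 3 * fact n)%nat.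
Proof.
  destruct n. rewrite Fsum_0. simpl. lia.
  destruct (Fsum_bounds (S n)); lia.
Qed.

Lemma Fsum_ge1 n : (1 <= Fsum n)%nat.
Proof.
  destruct n. rewrite Fsum_0. lia.
  destruct (Fsum_bounds (S n)); lia.
Qed.

Lemma INR_fact_pos n : 0 < INR (fact n).
Proof. apply lt_0_INR. apply Nat.neq_0_lt_0, fact_neq_0. Qed.

Lemma INR_fact_ge1 n : 1 <= INR (fact n).
Proof. apply (le_INR 1). pose proof (fact_neq_0 n). lia. Qed.

Lemma fact_mono a b : (a <= b)%nat -> INR (fact a) <= INR (fact b).
Proof. intros H. apply le_INR. apply fact_le. exact H. Qed.

Lemma hsum m : sum_f_R0 (fun x => INR (fact (x + 1)) / INR (fact (S m - (x + 1)))) m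
   <= 2 * INR (fact (S m)).
Proof.
  destruct m as [|k].
  - simpl. lra.
  - rewrite tech5.
    replace (S (S k) - (S k + 1))%nat with 0%nat by lia.
    replace (S k + 1)%nat with (S (S k)) by lia.
    assert (Hs : sum_f_R0 (fun x => INR (fact (x + 1)) / INR (fact (S (S k) - (x + 1)))) k
               <= sum_f_R0 (fun _ => INR (fact (S k))) k).
    { apply sum_Rle. intros x Hx.
      pose proof (INR_fact_ge1 (S (S k) - (x + 1))).
      pose proof (INR_fact_pos (x+1)).
      pose proof (fact_mono (x+1) (S k) ltac:(lia)).
      apply (Rle_trans _ (INR (fact (x+1)))).
      - unfold Rdiv. rewrite <- (Rmult_1_r (INR (fact (x+1)))) at 2.
        apply Rmult_le_compat_l; [lra|]. rewrite <- Rinv_1. apply Rinv_le_contravar; lra.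
      - lra. }
    rewrite sum_cte in Hs.
    assert (E : INR (fact (S (S k))) = INR (S (S k)) * INR (fact (S k))).
    { rewrite <- mult_INR. reflexivity. }
    assert (E2 : INR (S (S k)) = INR (S k) + 1) by (rewrite S_INR; reflexivity).
    replace (INR (fact 0)) with 1 by reflexivity.
    pose proof (INR_fact_pos (S k)). pose proof (pos_INR (S k)).
    rewrite E, E2. rewrite S_INR in Hs. rewrite S_INR in *. rewrite Rdiv_1_r. nra.
Qed.

Lemma key m : let N := S (S m) in
  0 <= sum_f_R0 (fun x => rps_weight N (x + 1)) m <=
  6 * INR (fact N) * INR (fact (S m)).
Proof.
  intros N.
  assert (T : forall x, (x <= m)%nat ->
    0 <= rps_weight N (x + 1) <=
    3 * INR (fact N) * (INR (fact (x + 1)) / INR (fact (S m - (x + 1))))).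
  { intros x Hx. unfold rps_weight. rewrite INR_Pperm by (unfold N; lia).
    replace (N - (x + 1))%nat with (S (S m - (x+1))) by (unfold N; lia).
    pose proof (Fsum_ge1 (x+1)) as G1. apply le_INR in G1.
    pose proof (Fsum_le (x+1)) as G2. apply le_INR in G2. rewrite mult_INR in G2.
    simpl (INR 3) in G2.
    pose proof (INR_fact_pos N). pose proof (INR_fact_pos (S (S m - (x + 1)))).
    pose proof (INR_fact_pos (S m - (x + 1))). pose proof (INR_fact_pos (x+1)).
    pose proof (fact_mono (S m - (x + 1)) (S (S m - (x + 1))) ltac:(lia)).
    set (A := INR (fact N)) in *. set (B := INR (fact (S (S m - (x + 1))))) in *.
    set (C := INR (fact (S m - (x + 1)))) in *. set (D := INR (fact (x + 1))) in *.
    set (F := INR (Fsum (x + 1))) in *. simpl INR in G1.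
    split.
    - apply Rmult_le_pos; [|lra]. apply Rlt_le, Rdiv_lt_0_compat; lra.
    - assert (A / B <= A / C).
      { unfold Rdiv. apply Rmult_le_compat_l; [lra|]. apply Rinv_le_contravar; lra. }
      assert (0 <= A / C) by (apply Rlt_le, Rdiv_lt_0_compat; lra).
      assert (A / B * (F - 1) <= A / C * (3 * D)).
      { apply Rmult_le_compat; try lra. apply Rlt_le, Rdiv_lt_0_compat; lra. }
      replace (3 * A * (D / C)) with (A / C * (3 * D)) by (field; lra). lra. }
  split.
  - apply cond_pos_sum. intros x. destruct (le_lt_dec x m).
    + apply T; lia.
    +
      unfold rps_weight. pose proof (pos_INR (Pperm N (x+1))).
      pose proof (Fsum_ge1 (x+1)) as G1. apply le_INR in G1. simpl INR in G1.
      apply Rmult_le_pos; lra.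
  - apply (Rle_trans _ (sum_f_R0 (fun x =>
        (INR (fact (x + 1)) / INR (fact (S m - (x + 1)))) * (3 * INR (fact N))) m)).
    + apply sum_Rle. intros. rewrite Rmult_comm. apply T; lia.
    + rewrite <- scal_sum.
      pose proof (hsum m). pose proof (INR_fact_pos N). nra.
Qed.

Lemma bound m : let N := S (S m) in
  0 <= 1 - P_RPS N N <= 6 / INR N.
Proof.
  intros N. unfold P_RPS, sum_f.
  replace (N - 1)%nat with (S m) by (unfold N; lia).
  rewrite tech5. replace (S m + 1)%nat with N by (unfold N; lia).
  destruct (key m) as [R0 R1]. fold N in R0, R1.
  set (R := sum_f_R0 (fun x => rps_weight N (x + 1)) m) in *.
  assert (Ha : INR (fact N) * INR (fact N) <= rps_weight N N).
  { unfold rps_weight. rewrite INR_Pperm by lia. rewrite Nat.sub_diag. simpl (fact 0).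
    destruct (Fsum_bounds N ltac:(unfold N; lia)) as [G _]. apply le_INR in G.
    rewrite plus_INR in G. simpl (INR 1) in G. pose proof (INR_fact_pos N).
    replace (INR (fact N) / INR 1) with (INR (fact N)) by (simpl; field).
    apply Rmult_le_compat_l; lra. }
  assert (EN : INR (fact N) = INR N * INR (fact (S m))) by (rewrite <- mult_INR; reflexivity).
  pose proof (INR_fact_pos N). pose proof (INR_fact_pos (S m)).
  assert (HN : 0 < INR N) by (apply lt_0_INR; unfold N; lia).
  set (a := rps_weight N N) in *.
  assert (Hpa : 0 < a) by nra.
  replace (1 - a / (R + a)) with (R / (R + a)) by (field; lra).
  split. apply Rmult_le_pos; [lra|]. apply Rlt_le, Rinv_0_lt_compat; lra.
  apply (Rle_trans _ (R / a)).
  - unfold Rdiv. apply Rmult_le_compat_l; [lra|]. apply Rinv_le_contravar; lra.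
  - apply (Rmult_le_reg_r a); [lra|]. unfold Rdiv. rewrite Rmult_assoc, Rinv_l by lra.
    rewrite Rmult_1_r.
    apply (Rle_trans _ (6 * INR (fact N) * INR (fact (S m)))); [lra|].
    apply (Rle_trans _ (6 * / INR N * (INR (fact N) * INR (fact N)))).
    + rewrite EN at 2. right. field. lra.
    + apply Rmult_le_compat_l; [|lra]. apply Rmult_le_pos; [lra|].
      apply Rlt_le, Rinv_0_lt_compat; lra.
Qed.

Theorem mainTheorem2 : is_lim_seq (fun N : nat => P_RPS N N) 1%R.
Proof.
  apply (is_lim_seq_le_le_loc (fun n => 1 - 6 * / INR n) _ (fun _ => 1)).
  - exists 2%nat. intros n Hn. destruct n as [|[|m]]; try lia.
    destruct (bound m) as [B1 B2]. unfold Rdiv in B2. lra.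
  - replace (Finite 1) with (Finite (1 - 6 * 0)) by (f_equal; ring).
    apply is_lim_seq_minus'. apply is_lim_seq_const.
    apply (is_lim_seq_scal_l _ 6 (Finite 0)). 
    replace (Finite 0) with (Rbar_inv p_infty) by reflexivity.
    apply is_lim_seq_inv. apply is_lim_seq_INR. discriminate.
  - apply is_lim_seq_const.
Qed.
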